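(* Let $F$ be the elementary cellular automaton with rule number 184. Then $D(\textsc{Pred}_{F,n})=\Theta(\log n)$: there is a protocol using $O(\log n)$ bits, and no protocol uses asymptotically fewer.
   Context: An elementary cellular automaton (ECA) with rule number $N\in\{0,\dots,255\}$ is the map $F:\{0,1\}^{\mathbb Z}\to\{0,1\}^{\mathbb Z}$ given by $F(x)_i=f(x_{i-1},x_i,x_{i+1})$. Here the local rule $f:\{0,1\}^3\to\{0,1\}$ is determined by $N=\sum_{a,b,c\in\{0,1\}}2^{4a+2b+c}f(a,b,c)$. On a finite word of length $m\ge 3$, $F$ produces the word of length $m-2$ obtained by applying $f$ at every position whose full neighbourhood lies in the word. For $n\ge1$, $\textsc{Pred}_{F,n}:\{0,1\}^{2n+1}\to\{0,1\}$ maps a word $x=x_{-n}\cdots x_n$ to the single letter of $F^n(x)$, i.e. the state of the central cell after $n$ steps. For a function $g:X\times Y\to Z$, $D(g)$ is the minimal depth of a deterministic two-party protocol computing $g$. In such a protocol, Alice knows $x$ and Bob knows $y$. The protocol is a binary tree: each internal node is labelled by a function of Alice's input only or of Bob's input only, with values in $\{\text{left},\text{right}\}$, and each leaf is labelled by an output value. For $g:\{0,1\}^m\to Z$, set $D(g)=\max_{0\le i<m}D(g_i)$, where $g_i:\{0,1\}^i\times\{0,1\}^{m-i}\to Z$ is $g_i(x,y)=g(xy)$. *)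

(* Defs.v *)
From mathcomp Require Import all_boot.
Set Implicit Arguments. Unset Strict Implicit. Unset Printing Implicit Defensive.

Definition eca_local (N : nat) (a b c : bool) : bool :=
  odd (N %/ 2 ^ (4 * a + 2 * b + c)).

(* One step of F on a finite word: length m >= 3 gives length m-2
   (applying f at every position whose full neighbourhood lies in the word). *)
Fixpoint eca_step (N : nat) (w : seq bool) : seq bool :=
  match w with
  | a :: ((b :: c :: _) as t) => eca_local N a b c :: eca_step N t
  | _ => [::]
  end.

(* Pred_{F,n}: on a word of length 2n+1, the single letter of F^n(x). *)
Definition Pred (N n : nat) (x : seq bool) : bool :=
  head false (iter n (eca_step N) x).

(* Deterministic two-party protocols (binary trees); a node query returning
   true means "left". *)
Inductive protocol (X Y Z : Type) : Type :=
  | Leaf of Z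
  | AliceNode of (X -> bool) & protocol X Y Z & protocol X Y Z
  | BobNode of (Y -> bool) & protocol X Y Z & protocol X Y Z.

Arguments Leaf {X Y Z}.
Arguments AliceNode {X Y Z}.
Arguments BobNode {X Y Z}.

Fixpoint run (X Y Z : Type) (P : protocol X Y Z) (x : X) (y : Y) : Z :=
  match P with
  | Leaf z => z
  | AliceNode q l r => if q x then run l x y else run r x y
  | BobNode q l r => if q y then run l x y else run r x y
  end.

Fixpoint depth (X Y Z : Type) (P : protocol X Y Z) : nat :=
  match P with
  | Leaf _ => 0
  | AliceNode _ l r => (maxn (depth l) (depth r)).+1
  | BobNode _ l r => (maxn (depth l) (depth r)).+1
  end.

Definition computes_cut (Z : Type) (g : seq bool -> Z) (m i : nat)
    (P : protocol (seq bool) (seq bool) Z) : Prop :=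
  forall x y, size x = i -> size y = m - i -> run P x y = g (x ++ y).

(* D(g) = max_{0<=i<m} D(g_i), D(g_i) = min depth of a protocol computing g_i.
   "D(g) <= d" and "d <= D(g)" unfolded: *)
Definition D_le (Z : Type) (g : seq bool -> Z) (m d : nat) : Prop :=
  forall i, i < m -> exists P, computes_cut g m i P /\ depth P <= d.

Definition D_ge (Z : Type) (g : seq bool -> Z) (m d : nat) : Prop :=
  exists i, i < m /\ forall P, computes_cut g m i P -> d <= depth P.

(* Main.v *)
Require Import Defs.
From mathcomp Require Import all_boot.
From mathcomp Require Import zify.

Definition Pw (w : seq bool) (j : nat) : nat := count id (take j w).

Fixpoint Kr (F : nat -> nat) (t p : nat) : nat :=
  match t with
  | 0 => F p
  | t'.+1 => maxn (Kr F t' p).+1 (Kr F t' p.+2)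
  end.

Lemma local184 a b c : eca_local 184 a b c = if b then c else a.
Proof. by case: a; case: b; case: c. Qed.

Lemma size_step N v : size (eca_step N v) = size v - 2.
Proof.
elim: v => [|a t IH] //=.
case: t IH => [|b [|c t]] IH //=.
rewrite IH /=. lia.
Qed.

Lemma nth_step N v k : k + 2 < size v ->
  nth false (eca_step N v) k =
  eca_local N (nth false v k) (nth false v k.+1) (nth false v k.+2).
Proof.
elim: v k => [|a t IH] k //=.
case: t IH => [|b [|c t]] IH //=; try lia.
case: k => [|k] //= h.
by rewrite IH //=; lia.
Qed.

Lemma local_arith A0 A1 A2 A3 :
  A0 <= A1 <= A0.+1 -> A1 <= A2 <= A1.+1 -> A2 <= A3 <= A2.+1 ->
  eca_local 184 (A0 < A1) (A1 < A2) (A2 < A3) = (maxn A0.+1 A2 < maxn A1.+1 A3).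
Proof.
move=> h1 h2 h3; rewrite local184.
case: (ltnP A1 A2) => h4; case: (ltnP A2 A3) => h5; case: (ltnP A0 A1) => h6.
all: first [ symmetry; apply/idP; lia | symmetry; apply/negbTE; rewrite -leqNgt; lia ].
Qed.

Lemma Pw_S w k : k < size w -> Pw w k.+1 = Pw w k + nth false w k.
Proof. by move=> h; rewrite /Pw (take_nth false h) -cats1 count_cat /= addn0. Qed.

Lemma iter_spec w t :
  size (iter t (eca_step 184) w) = size w - 2 * t /\
  forall k, k + 2 * t < size w ->
    nth false (iter t (eca_step 184) w) k = (Kr (Pw w) t k < Kr (Pw w) t k.+1) /\
    Kr (Pw w) t k <= Kr (Pw w) t k.+1 <= (Kr (Pw w) t k).+1.
Proof.
elim: t => [|t [IHs IH]].
  split; first by rewrite /= subn0.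
  move=> k; rewrite addn0 /= => hk; rewrite Pw_S //.
  by case: (nth false w k); rewrite ?addn1 ?addn0 ?ltnSn ?ltnn ?leqnn ?leqnSn.
rewrite iterS size_step IHs; split; first by lia.
move=> k hk.
have [e0 l0] := IH k ltac:(lia).
have [e1 l1] := IH k.+1 ltac:(lia).
have [e2 l2] := IH k.+2 ltac:(lia).
rewrite nth_step; last by rewrite IHs; lia.
rewrite e0 e1 e2 local_arith //=.
split => //; lia.
Qed.

Lemma Pred_formula n w : size w = (2 * n).+1 ->
  Pred 184 n w = (Kr (Pw w) n 0 < Kr (Pw w) n 1).
Proof.
move=> hw; have [_ H] := iter_spec w n.
have [e _] := H 0 ltac:(lia).
by rewrite /Pred -e; case: (iter _ _ _).
Qed.

Lemma eq_Kr F G t p : F =1 G -> Kr F t p = Kr G t p.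
Proof. by move=> e; elim: t p => [|t IH] p /=; rewrite ?IH. Qed.

Lemma Kr_max F G t p :
  Kr (fun j => maxn (F j) (G j)) t p = maxn (Kr F t p) (Kr G t p).
Proof. elim: t p => [|t IH] p //=; rewrite !IH; lia. Qed.

Lemma Kr_ub F B t p : (forall j, F j <= B) -> Kr F t p <= B + t.
Proof.
move=> h; elim: t p => [|t IH] p /=; first by rewrite addn0.
have := IH p; have := IH p.+2; lia.
Qed.

Lemma Kr_lb F t p s : s <= t -> F (p + 2 * s) + (t - s) <= Kr F t p.
Proof.
elim: t p s => [|t IH] p s /=.
  by rewrite leqn0 => /eqP ->; rewrite addn0 muln0 addn0.
case: s => [|s] hs.
  have := IH p 0 isT; rewrite !muln0 !addn0 !subn0 => h. lia.
have := IH p.+2 s hs.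
have -> : p.+2 + 2 * s = p + 2 * s.+1 by lia.
rewrite subSS => h; lia.
Qed.

Lemma Kr_le F t p B : (forall s, s <= t -> F (p + 2 * s) + (t - s) <= B) ->
  Kr F t p <= B.
Proof.
elim: t p B => [|t IH] p B h /=.
  by have := h 0 isT; rewrite muln0 addn0 addn0.
rewrite geq_max; apply/andP; split.
  have h0 := h 0 isT.
  have : Kr F t p <= B.-1.
    apply: IH => s hs; have := h s ltac:(lia); lia.
  rewrite muln0 addn0 subn0 in h0; lia.
apply: IH => s hs; have := h s.+1 hs.
have -> : p.+2 + 2 * s = p + 2 * s.+1 by lia.
by rewrite subSS.
Qed.

Section Proto.
Variables X Y Z : Type.

Fixpoint enc (b : nat) (a : X -> nat) (F : nat -> protocol X Y Z) : protocol X Y Z :=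
  match b with
  | 0 => F 0
  | b'.+1 => enc b' (fun x => (a x)./2)
               (fun k => AliceNode (fun x => odd (a x)) (F k.*2.+1) (F k.*2))
  end.

Lemma run_enc b a F x y : a x < 2 ^ b -> run (enc b a F) x y = run (F (a x)) x y.
Proof.
elim: b a F => [|b IH] a F /=.
  by rewrite expn0 ltnS leqn0 => /eqP ->.
move=> h; rewrite IH /=; last by rewrite -divn2 ltn_divLR // -expnSr.
case hodd: (odd (a x)); congr (run (F _) x y);
  have := odd_double_half (a x); rewrite hodd /= => e.
  by rewrite -{2}e add1n.
by rewrite -{2}e add0n.
Qed.

Lemma depth_enc b a F d : (forall k, depth (F k) <= d) -> depth (enc b a F) <= b + d.
Proof.
elim: b a F d => [|b IH] a F d h /=; first exact: h.
apply: leq_trans (IH _ _ d.+1 _) _; last by rewrite addSnnS.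
by move=> k /=; rewrite ltnS geq_max !h.
Qed.
End Proto.
Arguments enc {X Y Z}.
Arguments run_enc {X Y Z}.
Arguments depth_enc {X Y Z}.

Definition PA (x : seq bool) (j : nat) : nat := if j <= size x then Pw x j else 0.
Definition PB (i c : nat) (y : seq bool) (j : nat) : nat :=
  if i <= j then c + Pw y (j - i) else 0.

Lemma Pw_le_count x j : Pw x j <= count id x.
Proof. by rewrite /Pw -{2}(cat_take_drop j x) count_cat leq_addr. Qed.

Lemma Pw_cat x y j :
  Pw (x ++ y) j = maxn (PA x j) (PB (size x) (count id x) y j).
Proof.
rewrite /PA /PB {1}/Pw take_cat.
case: ltnP => h.
  by rewrite (ltnW h) /= maxn0.
rewrite count_cat.
case: leqP => h2.
  have -> : j = size x by apply/eqP; rewrite eqn_leq h2 h.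
  rewrite /Pw take_size subnn; lia.
by rewrite max0n.
Qed.

Definition Bob_out (n i : nat) (k0 k1 c : nat) (y : seq bool) : bool :=
  maxn k0 (Kr (PB i c y) n 0) < maxn k1 (Kr (PB i c y) n 1).

Definition UP (b n i : nat) : protocol (seq bool) (seq bool) bool :=
  enc b (fun x => Kr (PA x) n 0) (fun k0 =>
  enc b (fun x => Kr (PA x) n 1) (fun k1 =>
  enc b (fun x => count id x) (fun c =>
  BobNode (Bob_out n i k0 k1 c) (Leaf true) (Leaf false)))).

Lemma UP_depth b n i : depth (UP b n i) <= 3 * b + 1.
Proof.
have -> : 3 * b + 1 = b + (b + (b + 1)) by lia.
apply: depth_enc => k0; apply: depth_enc => k1; apply: depth_enc => c.
by [].
Qed.

Lemma UP_correct b n i x y : size x = i -> size y = (2 * n).+1 - i -> i <= 2 * n ->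
  3 * n < 2 ^ b ->
  run (UP b n i) x y = Pred 184 n (x ++ y).
Proof.
move=> hx hy hi hb.
have hK p : Kr (PA x) n p < 2 ^ b.
  apply: leq_ltn_trans (Kr_ub _ (2 * n) _ _ _) _; last by lia.
  move=> j; rewrite /PA; case: ifP => // _.
  apply: leq_trans (Pw_le_count _ _) _; apply: leq_trans (count_size _ _) _; lia.
have hc : count id x < 2 ^ b.
  apply: leq_ltn_trans (count_size _ _) _; lia.
rewrite /UP run_enc // run_enc // run_enc //=.
rewrite Pred_formula; last by rewrite size_cat; lia.
rewrite (eq_Kr _ _ n 0 (Pw_cat x y)) (eq_Kr _ _ n 1 (Pw_cat x y)) !Kr_max hx.
by rewrite /Bob_out; case: (_ < _).
Qed.

Lemma Pw_true k s j : Pw (nseq k true ++ s) j = minn j k + Pw s (j - k).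
Proof.
rewrite /Pw take_cat size_nseq; case: ltnP => h.
  rewrite take_nseq ?(ltnW h) // count_nseq /= mul1n.
  have -> : j - k = 0 by lia.
  rewrite take0 /=; lia.
rewrite count_cat count_nseq /= mul1n; congr (_ + _); lia.
Qed.

Lemma Pw_false k s j : Pw (nseq k false ++ s) j = Pw s (j - k).
Proof.
rewrite /Pw take_cat size_nseq; case: ltnP => h.
  rewrite take_nseq ?(ltnW h) // count_nseq /= mul0n.
  have -> : j - k = 0 by lia.
  by rewrite take0.
by rewrite count_cat count_nseq /= mul0n.
Qed.

Lemma Pw_trues k j : Pw (nseq k true) j = minn j k.
Proof. by have := Pw_true k [::] j; rewrite cats0 => ->; rewrite /Pw /= addn0. Qed.

Definition xf (n a : nat) : seq bool := nseq (2 * a) true ++ nseq (n - 2 * a) false.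
Definition yf (n a : nat) : seq bool := nseq a false ++ nseq (n.+1 - a) true.

Lemma Pw_fam n a b j : Pw (xf n a ++ yf n b) j =
  minn j (2 * a) + minn (j - 2 * a - (n - 2 * a) - b) (n.+1 - b).
Proof.
by rewrite /xf /yf -catA Pw_true Pw_false Pw_false Pw_trues.
Qed.

Lemma size_fam n a b : 2 * a <= n -> b <= n.+1 -> size (xf n a ++ yf n b) = (2 * n).+1.
Proof. move=> h1 h2; rewrite size_cat !size_cat !size_nseq; lia. Qed.

Lemma fam_diag n a : 2 * a <= n -> Pred 184 n (xf n a ++ yf n a).
Proof.
move=> ha; rewrite Pred_formula ?size_fam //; last by lia.
have h0 : Kr (Pw (xf n a ++ yf n a)) n 0 <= n + a.
  by apply: Kr_le => s hs; rewrite Pw_fam; lia.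
have h1 := Kr_lb (Pw (xf n a ++ yf n a)) n 1 n (leqnn n).
rewrite Pw_fam in h1; lia.
Qed.

Lemma fam_off n j k : 2 * j <= n -> 2 * k <= n -> j < k ->
  Pred 184 n (xf n j ++ yf n k) = false.
Proof.
move=> hj hk hjk; rewrite Pred_formula ?size_fam //; last by lia.
have h1 : Kr (Pw (xf n j ++ yf n k)) n 1 <= n + j.
  by apply: Kr_le => s hs; rewrite Pw_fam; lia.
have h0 := Kr_lb (Pw (xf n j ++ yf n k)) n 0 j ltac:(lia).
rewrite Pw_fam in h0.
apply/negbTE; rewrite -leqNgt; apply: leq_trans h1 _.
apply: leq_trans h0; lia.
Qed.

Section Fool.
Variables X Y : Type.
Variables (xs : nat -> X) (ys : nat -> Y).

Lemma fooling (P : protocol X Y bool) (L : seq nat) : uniq L ->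
  (forall a, a \in L -> run P (xs a) (ys a)) ->
  (forall a b, a \in L -> b \in L -> a < b -> ~~ run P (xs a) (ys b)) ->
  size L <= 2 ^ depth P.
Proof.
elim: P L => [z|q l IHl r IHr|q l IHl r IHr] L hu hd ho /=.
- case: L hu hd ho => [|a [|b L]] //= hu hd ho.
  exfalso; move: hu => /andP [hab _]; rewrite inE negb_or in hab.
  move: hab => /andP [hab _].
  have ha := hd a (mem_head _ _); have hb := hd b ltac:(by rewrite !inE eqxx orbT).
  case: (ltngtP a b) hab => // h _.
  + by move: (ho a b (mem_head _ _) ltac:(by rewrite !inE eqxx orbT) h); rewrite ha.
  + by move: (ho b a ltac:(by rewrite !inE eqxx orbT) (mem_head _ _) h); rewrite ha.
- rewrite -(count_predC (fun a => q (xs a)) L) -!size_filter expnS mul2n -addnn.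
  apply: leq_add.
  + apply: leq_trans (IHl _ (filter_uniq _ hu) _ _) _.
    * by move=> a; rewrite mem_filter => /andP [hq hL]; have := hd a hL; rewrite /= hq.
    * move=> a b; rewrite !mem_filter => /andP [hq hL] /andP [_ hL'] h.
      by have := ho a b hL hL' h; rewrite /= hq.
    * by rewrite leq_exp2l // leq_maxl.
  + apply: leq_trans (IHr _ (filter_uniq _ hu) _ _) _.
    * by move=> a; rewrite mem_filter => /andP [hq hL]; have := hd a hL; rewrite /= (negbTE hq).
    * move=> a b; rewrite !mem_filter => /andP [hq hL] /andP [_ hL'] h.
      by have := ho a b hL hL' h; rewrite /= (negbTE hq).
    * by rewrite leq_exp2l // leq_maxr.
- rewrite -(count_predC (fun a => q (ys a)) L) -!size_filter expnS mul2n -addnn.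
  apply: leq_add.
  + apply: leq_trans (IHl _ (filter_uniq _ hu) _ _) _.
    * by move=> a; rewrite mem_filter => /andP [hq hL]; have := hd a hL; rewrite /= hq.
    * move=> a b; rewrite !mem_filter => /andP [_ hL] /andP [hq hL'] h.
      by have := ho a b hL hL' h; rewrite /= hq.
    * by rewrite leq_exp2l // leq_maxl.
  + apply: leq_trans (IHr _ (filter_uniq _ hu) _ _) _.
    * by move=> a; rewrite mem_filter => /andP [hq hL]; have := hd a hL; rewrite /= (negbTE hq).
    * move=> a b; rewrite !mem_filter => /andP [_ hL] /andP [hq hL'] h.
      by have := ho a b hL hL' h; rewrite /= (negbTE hq).
    * by rewrite leq_exp2l // leq_maxr.
Qed.
End Fool.
Arguments fooling {X Y}.

Theorem mainTheorem19 :
  (exists C N0 : nat, forall n, N0 <= n ->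
      D_le (Pred 184 n) (2 * n + 1) (C * trunc_log 2 n)) /\
  (exists c N0 : nat, 0 < c /\ forall n, N0 <= n ->
      D_ge (Pred 184 n) (2 * n + 1) (trunc_log 2 n %/ c)).
Proof.
split.
  exists 13, 2 => n hn i hi.
  set t := trunc_log 2 n.
  have ht : n < 2 ^ t.+1 by apply: trunc_log_ltn.
  have ht1 : 1 <= t.
    case: t ht => [|t'] //; rewrite expn1; lia.
  exists (UP (t + 3) n i); split.
    move=> x y hx hy; apply: UP_correct => //; try lia.
    rewrite expnD expnS in ht *; lia.
  apply: leq_trans (UP_depth _ _ _) _; lia.
exists 1, 1; split => // n hn.
exists n; split; first by lia.
move=> P hP; rewrite divn1.
set t := trunc_log 2 n.
have ht : 2 ^ t <= n by apply: trunc_logP.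
have hs : size (iota 0 (n %/ 2).+1) <= 2 ^ depth P.
  apply: (fooling (xf n) (yf n) P); first exact: iota_uniq.
  - move=> a; rewrite mem_iota => ha.
    rewrite hP; first by apply: fam_diag; lia.
    + by rewrite /xf size_cat !size_nseq; lia.
    + by rewrite /yf size_cat !size_nseq; lia.
  - move=> a b; rewrite !mem_iota => ha hb hab.
    rewrite hP; first by rewrite fam_off //; lia.
    + by rewrite /xf size_cat !size_nseq; lia.
    + by rewrite /yf size_cat !size_nseq; lia.
rewrite size_iota in hs.
rewrite leqNgt; apply/negP => hd.
have : 2 ^ (depth P).+1 <= 2 ^ t by rewrite leq_exp2l.
rewrite expnS; lia.
Qed.
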